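(* Let $D\ge1$, $f\in(0,1]$, and let $F=(F_{\alpha\beta})_{\alpha,\beta=1}^D$ be a real symmetric matrix with $f\le F_{\alpha\beta}\le1$ for all $\alpha,\beta$. Let $\{|\alpha\rangle\}$ be an orthonormal basis of $\mathbb C^D$ and define on $\mathbb C^D\otimes\mathbb C^D$ the operator $K=\frac1D\sum_{\alpha,\beta}F_{\alpha\beta}^2\,|\alpha,\alpha\rangle\langle\beta,\beta|$. Then $K$ has a unique (up to scalar) eigenvector $|\Psi\rangle=\sum_\alpha x_\alpha|\alpha,\alpha\rangle$ of largest eigenvalue $\lambda$, with all $x_\alpha>0$, $\max_\alpha x_\alpha/\min_\alpha x_\alpha\le 1/f^2$, and $f^2\le\lambda\le1$; moreover every other eigenvalue of $K$ is at most $(1-f^4)\lambda$. Consequently, for any real $a$, $\varepsilon>0$, the operator $M=a\,\mathbb I+\varepsilon^2 K$ (restricted to $\mathbb C^D\otimes\mathbb C^D$) has unique top eigenvector $|\Psi\rangle$ with eigenvalue $a+\varepsilon^2\lambda$, and spectral gap at least $\varepsilon^2f^4\lambda$. *)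

(* Defs.v *)
From HB Require Import structures.
From mathcomp Require Import all_boot all_order all_algebra.
From mathcomp Require Import complex mxtens.
Set Implicit Arguments. Unset Strict Implicit. Unset Printing Implicit Defensive.
Import Order.TTheory GRing.Theory Num.Theory.
Local Open Scope ring_scope.
Local Open Scope complex_scope.

Definition ket (R : rcfType) (D : nat) (a : 'I_D) : 'cV[R[i]]_D := delta_mx a 0.

Definition ket2 (R : rcfType) (D : nat) (a : 'I_D) : 'cV[R[i]]_(D * D) :=
  ket R a *t ket R a.

(* K = (1/D) sum_{alpha,beta} F_{alpha beta}^2 |alpha,alpha><beta,beta|.
   The bra <beta,beta| is the conjugate transpose of |beta,beta>; its entries
   are 0/1, so it equals the plain transpose. *)
Definition Kop (R : rcfType) (D : nat) (F : 'M[R]_D) : 'M[R[i]]_(D * D) :=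
  (D%:R)^-1 *: \sum_(a < D) \sum_(b < D)
     ((F a b ^+ 2)%:C *: (ket2 R a *m (ket2 R b)^T)).

Definition Psi (R : rcfType) (D : nat) (x : 'I_D -> R) : 'cV[R[i]]_(D * D) :=
  \sum_(a < D) (x a)%:C *: ket2 R a.

Definition eigvec (C : fieldType) (n : nat) (M : 'M[C]_n) (mu : C) (v : 'cV[C]_n) :=
  v != 0 /\ M *m v = mu *: v.

Definition top_gap (R : rcfType) (n : nat) (M : 'M[R[i]]_n) (top gap : R)
    (v0 : 'cV[R[i]]_n) : Prop :=
  [/\ eigvec M top%:C v0,
      (forall mu v, eigvec M mu v -> mu <= top%:C),
      (forall v, eigvec M top%:C v -> exists c : R[i], v = c *: v0) &
      (forall mu v, eigvec M mu v -> mu != top%:C -> mu <= (top - gap)%:C)].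

(* Main.v *)
Require Import Defs.
From HB Require Import structures.
From mathcomp Require Import all_boot all_order all_algebra.
From mathcomp Require Import complex mxtens.
From mathcomp Require Import ring.
Set Implicit Arguments. Unset Strict Implicit. Unset Printing Implicit Defensive.
Import Order.TTheory GRing.Theory Num.Theory Num.Def.
Local Open Scope ring_scope.
Section S.
Variable C : numClosedFieldType.
Lemma exists_argmax n (f : 'I_n -> C) : (0 < n)%N -> (forall i, f i \is Num.real) ->
  exists k, forall j, f j <= f k.
Proof.
move=> n0 fr.
suff H : forall s : seq 'I_n, s != [::] -> exists2 k, k \in s & forall j, j \in s -> f j <= f k.
  have [|k _ Hk] := H (enum 'I_n).
    by rewrite -size_eq0 size_enum_ord -lt0n.
  by exists k => j; apply: Hk; rewrite mem_enum.
elim=> [//|a s IH] _.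
case: (altP (s =P [::])) => [->|sn].
  by exists a; rewrite ?mem_head // => j; rewrite inE => /eqP ->.
have [k ks Hk] := IH sn.
have /orP [le|le] := real_leVge (fr a) (fr k).
  exists k; first by rewrite inE ks orbT.
  by move=> j; rewrite inE => /orP [/eqP ->|/Hk].
exists a; first by rewrite mem_head.
move=> j; rewrite inE => /orP [/eqP ->//|/Hk h]; exact: le_trans h le.
Qed.

Lemma nz_entry n (y : 'cV[C]_n) : y != 0 -> exists i, y i 0 != 0.
Proof.
move=> yn; apply/existsP; apply: contraR yn => /existsPn H.
by apply/eqP/matrixP => i j; rewrite ord1 mxE; apply/eqP; rewrite -[_ == _]negbK H.
Qed.

Lemma perron_bound n (G : 'M[C]_n) (x y : 'cV[C]_n) (rho mu : C) :
  (forall i j, 0 <= G i j) -> (forall i, 0 < x i 0) -> G *m x = rho *: x ->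
  y != 0 -> G *m y = mu *: y -> `|mu| <= rho.
Proof.
move=> G0 x0 Gx yn Gy.
have [i0 yi0] := nz_entry yn.
have n0 : (0 < n)%N := leq_ltn_trans (leq0n i0) (ltn_ord i0).
pose t j := `|y j 0| / x j 0.
have tr j : t j \is Num.real by apply: ger0_real; apply: divr_ge0; rewrite ?normr_ge0 ?ltW.
have [k Hk] := exists_argmax n0 tr.
have tk0 : 0 < t k.
  apply: lt_le_trans (Hk i0); rewrite divr_gt0 ?normr_gt0 //.
have yk0 : 0 < `|y k 0|.
  by move: tk0; rewrite /t pmulr_lgt0 // invr_gt0.
have le1 j : `|y j 0| <= t k * x j 0.
  by rewrite -ler_pdivrMr // Hk.
have : `|mu| * `|y k 0| <= rho * `|y k 0|.
  rewrite -normrM.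
  have -> : mu * y k 0 = (G *m y) k 0 by rewrite Gy mxE.
  rewrite mxE; apply: le_trans (ler_norm_sum _ _ _) _.
  have -> : rho * `|y k 0| = \sum_j G k j * (t k * x j 0).
    have -> : `|y k 0| = t k * x k 0 by rewrite /t divfK ?gt_eqF.
    rewrite mulrCA.
    have -> : rho * x k 0 = (G *m x) k 0 by rewrite Gx mxE.
    rewrite mxE mulr_sumr; apply: eq_bigr => j _; ring.
  apply: ler_sum => j _; rewrite normrM ger0_norm //.
  exact: ler_wpM2l.
by rewrite ler_pM2r.
Qed.

Lemma perron_unique n (G : 'M[C]_n) (x y : 'cV[C]_n) (rho : C) :
  (forall i j, 0 < G i j) -> (forall i, 0 < x i 0) -> G *m x = rho *: x ->
  G *m y = rho *: y -> exists c, y = c *: x.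
Proof.
move=> G0 x0 Gx Gy.
case: n G x y Gx Gy G0 x0 => [|n] G x y Gx Gy G0 x0.
  by exists 0; apply/matrixP => [[]].
pose i0 : 'I_n.+1 := ord0.
pose c := y i0 0 / x i0 0.
exists c; pose w := y - c *: x.
have Gw : G *m w = rho *: w by rewrite /w mulmxBr -scalemxAr Gx Gy scalerBr !scalerA mulrC.
have wi0 : w i0 0 = 0 by rewrite /w !mxE /c divfK ?gt_eqF // subrr.
have yE : y = c *: x + w by rewrite /w addrC subrK.
clearbody w.
have rho0 : 0 <= rho.
  have : 0 <= (G *m x) i0 0 by rewrite mxE sumr_ge0 // => j _; rewrite mulr_ge0 ?ltW.
  by rewrite Gx mxE pmulr_lge0.
pose t j := `|w j 0| / x j 0.
have tr j : t j \is Num.real by apply: ger0_real; apply: divr_ge0; rewrite ?normr_ge0 ?ltW.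
have [k Hk] := exists_argmax (ltn0Sn n) tr.
have le1 j : `|w j 0| <= t k * x j 0 by rewrite -ler_pdivrMr // Hk.
have wkE : `|w k 0| = t k * x k 0 by rewrite /t divfK ?gt_eqF.
have H1 : \sum_j G k j * (t k * x j 0) <= \sum_j G k j * `|w j 0|.
  have -> : \sum_j G k j * (t k * x j 0) = rho * `|w k 0|.
    rewrite wkE mulrCA.
    have -> : rho * x k 0 = (G *m x) k 0 by rewrite Gx mxE.
    rewrite mxE mulr_sumr; apply: eq_bigr => j _; ring.
  rewrite -(ger0_norm rho0) -normrM.
  have -> : rho * w k 0 = (G *m w) k 0 by rewrite Gw mxE.
  rewrite mxE; apply: le_trans (ler_norm_sum _ _ _) _.
  by apply: ler_sum => j _; rewrite normrM ger0_norm // ltW.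
have H2 : \sum_j G k j * (t k * x j 0 - `|w j 0|) == 0.
  rewrite eq_le sumr_ge0 ?andbT; last first.
    by move=> j _; rewrite mulr_ge0 ?subr_ge0 // ltW.
  rewrite (eq_bigr (fun j => G k j * (t k * x j 0) - G k j * `|w j 0|)); last first.
    by move=> j _; rewrite mulrBr.
  by rewrite sumrB subr_le0.
have Hnn : forall j, true -> 0 <= G k j * (t k * x j 0 - `|w j 0|).
  by move=> j _; rewrite mulr_ge0 ?subr_ge0 // ltW.
have H3 := psumr_eq0P Hnn (eqP H2).
have tk0 : t k = 0.
  have := H3 i0 isT; rewrite wi0 normr0 subr0.
  move/eqP; rewrite mulf_eq0 (gt_eqF (G0 _ _)) /= mulf_eq0 (gt_eqF (x0 _)) orbF.
  by move/eqP.
suff w0 : w = 0 by rewrite yE w0 addr0.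
apply/matrixP => j l; rewrite ord1 [RHS]mxE; apply/eqP; rewrite -normr_eq0 eq_le normr_ge0 andbT.
by apply: le_trans (le1 j) _; rewrite tk0 mul0r.
Qed.

Lemma herm_real n (G : 'M[C]_n) (y : 'cV[C]_n) (mu : C) :
  (forall i j, G i j = G j i) -> (forall i j, (G i j)^* = G i j) ->
  y != 0 -> G *m y = mu *: y -> mu^* = mu.
Proof.
move=> Gs Gr yn Gy.
have [i0 yi0] := nz_entry yn.
pose N := \sum_i (y i 0)^* * y i 0.
pose s := \sum_i (y i 0)^* * (G *m y) i 0.
have sE : s = mu * N.
  rewrite /s /N mulr_sumr; apply: eq_bigr => i _; rewrite Gy mxE; ring.
have sJ : s^* = s.
  rewrite /s rmorph_sum /=.
  under eq_bigr do rewrite mxE rmorphM /= conjCK rmorph_sum mulr_sumr.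
  under [RHS]eq_bigr do rewrite mxE mulr_sumr.
  rewrite exchange_big /=; apply: eq_bigr => i _; apply: eq_bigr => j _.
  by rewrite rmorphM /= Gr Gs; ring.
have NJ : N^* = N.
  by rewrite /N rmorph_sum; apply: eq_bigr => i _; rewrite rmorphM /= conjCK mulrC.
have N0 : N != 0.
  have Hnn : forall i, true -> 0 <= (y i 0)^* * y i 0.
    by move=> i _; rewrite -normCKC exprn_ge0.
  apply/negP => /eqP/(psumr_eq0P Hnn) H.
  have : (y i0 0)^* * y i0 0 = 0 by apply: H.
  by move/eqP; rewrite mulf_eq0 conjC_eq0 (negbTE yi0).
have : mu^* * N = mu * N by rewrite -sE -sJ sE rmorphM /= NJ.
by move/(mulIf N0).
Qed.

Lemma ortho n (G : 'M[C]_n) (x y : 'cV[C]_n) (l mu : C) :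
  G^T = G -> G *m x = l *: x -> G *m y = mu *: y -> mu != l -> x^T *m y = 0.
Proof.
move=> Gs Gx Gy ne.
have : l *: (x^T *m y) = mu *: (x^T *m y).
  have e1 : x^T *m (G *m y) = mu *: (x^T *m y) by rewrite Gy scalemxAr.
  rewrite -e1 mulmxA -{1}Gs -trmx_mul Gx linearZ /= scalemxAl //.
move/eqP; rewrite -subr_eq0 -scalerBl scaler_eq0 subr_eq0 eq_sym (negbTE ne) /=.
by move/eqP.
Qed.

Lemma perron_pos n (G : 'M[C]_n) (w : 'cV[C]_n) (l : C) :
  (forall i j, 0 < G i j) -> w != 0 -> (forall i, 0 <= w i 0) ->
  G *m w = l *: w -> 0 < l /\ forall i, 0 < w i 0.
Proof.
move=> G0 wn w0 Gw.
have [i0 wi0] := nz_entry wn.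
have wi0p : 0 < w i0 0 by rewrite lt_def wi0 w0.
have lw i : 0 < l * w i 0.
  have -> : l * w i 0 = (G *m w) i 0 by rewrite Gw mxE.
  rewrite mxE (bigD1 i0) //=; apply: ltr_wpDr.
    by apply: sumr_ge0 => j _; rewrite mulr_ge0 ?w0 // ltW.
  exact: mulr_gt0.
have wp i : 0 < w i 0.
  rewrite lt_def w0 andbT; apply/negP => /eqP e.
  by have := lw i; rewrite e mulr0 ltxx.
by split => //; have := lw i0; rewrite pmulr_lgt0.
Qed.

Lemma mulmx_tr_entry n (x y : 'cV[C]_n) i j : (x *m y^T) i j = x i 0 * y j 0.
Proof. by rewrite mxE big_ord1 mxE. Qed.

Lemma trmul_entry n (x y : 'cV[C]_n) : (x^T *m y) 0 0 = \sum_i x i 0 * y i 0.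
Proof. by rewrite mxE; apply: eq_bigr => i _; rewrite mxE. Qed.

Lemma perron_gap n (G : 'M[C]_n) (x y : 'cV[C]_n) (l mu m M : C) :
  G^T = G -> (forall i j, m <= G i j <= M) -> 0 < m ->
  (forall i, 0 < x i 0) -> 0 < l -> G *m x = l *: x ->
  y != 0 -> G *m y = mu *: y -> mu != l -> `|mu| <= l - (m / M) ^+ 2 * l.
Proof.
move=> Gs GmM m0 x0 l0 Gx yn Gy ne.
have [i0 _] := nz_entry yn.
have M0 : 0 < M by case/andP: (GmM i0 i0) => h1 h2; apply: lt_le_trans m0 (le_trans h1 h2).
pose S := \sum_i x i 0.
have S0 : 0 < S by rewrite /S (bigD1 i0) //=; apply: ltr_wpDr; rewrite ?x0 // sumr_ge0 // => i _; rewrite ltW.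
have bnd a : m * S <= l * x a 0 <= M * S.
  have -> : l * x a 0 = (G *m x) a 0 by rewrite Gx mxE.
  rewrite mxE /S !mulr_sumr; apply/andP; split; apply: ler_sum => b _.
    by apply: ler_wpM2r; [exact: ltW | case/andP: (GmM a b)].
  by apply: ler_wpM2r; [exact: ltW | case/andP: (GmM a b)].
pose c0 := m * l ^+ 2 / (M * S) ^+ 2.
pose q := (x^T *m x) 0 0.
have MS0 : 0 < (M * S) ^+ 2 by rewrite exprn_gt0 // mulr_gt0.
pose B := G - c0 *: (x *m x^T).
have B0 i j : 0 <= B i j.
  have -> : B i j = G i j - c0 * (x *m x^T) i j by rewrite /B !mxE.
  rewrite mulmx_tr_entry subr_ge0.
  apply: le_trans (_ : m <= G i j); last by case/andP: (GmM i j).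
  have -> : c0 * (x i 0 * x j 0) = m * ((l * x i 0) * (l * x j 0)) / (M * S) ^+ 2.
    rewrite /c0; field; by rewrite !gt_eqF.
  rewrite ler_pdivrMr // ler_pM2l //.
  have Hi := bnd i; have Hj := bnd j.
  rewrite expr2; apply: ler_pM.
  - by rewrite mulr_ge0 // ltW.
  - by rewrite mulr_ge0 // ltW.
  - by case/andP: Hi.
  - by case/andP: Hj.
have Bx : B *m x = (l - c0 * q) *: x.
  rewrite /B mulmxBl Gx -scalemxAl -mulmxA.
  have -> : x^T *m x = q%:M by apply/matrixP => i j; rewrite !ord1 [RHS]mxE /= mulr1n.
  by rewrite mul_mx_scalar scalerA scalerBl.
have xy : x^T *m y = 0 by apply: ortho Gs Gx Gy ne.
have By : B *m y = mu *: y.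
  by rewrite /B mulmxBl Gy -scalemxAl -mulmxA xy mulmx0 scaler0 subr0.
have H := perron_bound B0 x0 Bx yn By.
apply: le_trans H _; rewrite lerD2l lerN2.
have lq : m * S ^+ 2 <= l * q.
  have -> : m * S ^+ 2 = \sum_a (m * S) * x a 0 by rewrite expr2 mulrA /S mulr_sumr.
  rewrite /q trmul_entry mulr_sumr; apply: ler_sum => a _.
  rewrite mulrA; apply: ler_wpM2r; [exact: ltW | by case/andP: (bnd a)].
have -> : c0 * q = m * l * (l * q) / (M * S) ^+ 2 by rewrite /c0; field; rewrite !gt_eqF.
rewrite ler_pdivlMr //.
apply: le_trans (_ : m * l * (m * S ^+ 2) <= _); last by rewrite ler_pM2l ?mulr_gt0.
rewrite le_eqVlt; apply/orP; left; apply/eqP; field.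
by rewrite gt_eqF.
Qed.

Lemma quad_diag n (v : 'cV[C]_n) (d : 'rV[C]_n) :
  (map_mx conjC v^T *m diag_mx d *m v) 0 0 = \sum_k d 0 k * ((v k 0)^* * v k 0).
Proof.
rewrite mxE; apply: eq_bigr => k _; rewrite mul_mx_diag !mxE; ring.
Qed.

Lemma quad_id n (v : 'cV[C]_n) :
  (map_mx conjC v^T *m v) 0 0 = \sum_k (v k 0)^* * v k 0.
Proof. by rewrite mxE; apply: eq_bigr => k _; rewrite !mxE. Qed.

Lemma perron_exists n (G : 'M[C]_n) : (0 < n)%N -> G^T = G ->
  (forall i j, 0 <= G i j) ->
  exists l (w : 'cV[C]_n), [/\ w != 0, forall i, 0 <= w i 0 & G *m w = l *: w].
Proof.
move=> n0 Gs G0.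
have Greal i j : (G i j)^* = G i j by apply: conj_Creal; apply: ger0_real.
have Gh : G \is hermsymmx.
  apply/is_hermitianmxP; rewrite expr0 scale1r; apply/matrixP => i j.
  by rewrite !mxE Greal -{1}Gs mxE.
have GE : G = invmx (spectralmx G) *m diag_mx (spectral_diag G) *m spectralmx G.
  by apply/orthomx_spectralP; exact: hermitian_normalmx.
have dreal k : spectral_diag G 0 k \is Num.real.
  by have /mxOverP := hermitian_spectral_diag_real Gh; apply.
have Punit := spectral_unitarymx G.
have PU := unitarymx_unit Punit.
have PsE := invmx_unitary Punit.
move: GE PsE dreal PU; set P := spectralmx G; set d := spectral_diag G.
move=> GE PsE dreal PU.
have [k0 Hk] := exists_argmax n0 dreal.
pose l := d 0 k0.
pose e : 'cV[C]_n := delta_mx k0 0.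
have de : diag_mx d *m e = l *: e.
  apply/matrixP => i j; rewrite mul_diag_mx !mxE ord1.
  by have [->|ne] := eqVneq i k0; rewrite ?eqxx ?(negbTE ne) /= ?mulr0.
pose u := invmx P *m e.
have Gu : G *m u = l *: u.
  by rewrite GE /u -!mulmxA (mulmxA P) mulmxV // mul1mx de scalemxAr.
have un : u != 0.
  apply/negP => /eqP u0.
  have : P *m u = e by rewrite /u mulKVmx.
  rewrite u0 mulmx0 => /matrixP /(_ k0 0); rewrite !mxE !eqxx /=.
  by move/eqP; rewrite eq_sym oner_eq0.
pose w := map_mx normr u.
pose Q (z : 'cV[C]_n) := (map_mx conjC z^T *m G *m z) 0 0.
pose N (z : 'cV[C]_n) := (map_mx conjC z^T *m z) 0 0.
have conjT (z : 'cV[C]_n) : map_mx conjC z^T *m invmx P = map_mx conjC (P *m z)^T.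
  by rewrite PsE trmx_mul map_mxM.
have QE (z : 'cV[C]_n) : Q z = \sum_k d 0 k * (((P *m z) k 0)^* * (P *m z) k 0).
  by rewrite /Q GE !mulmxA conjT -mulmxA -[in LHS]mulmxA mulmxA quad_diag.
have NE (z : 'cV[C]_n) : N z = \sum_k ((P *m z) k 0)^* * (P *m z) k 0.
  rewrite /N -quad_id -conjT -mulmxA (mulmxA _ P) mulVmx // mul1mx //.
have Hle (z : 'cV[C]_n) : l * N z - Q z = \sum_k (l - d 0 k) * (((P *m z) k 0)^* * (P *m z) k 0).
  by rewrite QE NE mulr_sumr -sumrB; apply: eq_bigr => k _; rewrite mulrBl.
have Hnn (z : 'cV[C]_n) k : true -> 0 <= (l - d 0 k) * (((P *m z) k 0)^* * (P *m z) k 0).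
  by move=> _; rewrite mulr_ge0 // ?subr_ge0 ?Hk // -normCKC exprn_ge0.
have Nuw : N u = N w.
  rewrite /N !quad_id; apply: eq_bigr => k _; rewrite !mxE -normCKC.
  by rewrite conj_Creal ?normr_real // -expr2 normr_id.
have Qu : Q u = l * N u by rewrite /Q /N -mulmxA Gu -scalemxAr [LHS]mxE.
have QuE : Q u = \sum_i \sum_j (u i 0)^* * G i j * u j 0.
  rewrite /Q -mulmxA mxE; apply: eq_bigr => i _; rewrite !mxE mulr_sumr.
  by apply: eq_bigr => j _; rewrite mulrA.
have QwE : Q w = \sum_i \sum_j `|u i 0| * G i j * `|u j 0|.
  rewrite /Q -mulmxA mxE; apply: eq_bigr => i _; rewrite !mxE mulr_sumr.
  rewrite conj_Creal ?normr_real //.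
  by apply: eq_bigr => j _; rewrite mulrA !mxE.
have Nr : N u \is Num.real.
  rewrite /N quad_id; apply: ger0_real; apply: sumr_ge0 => k _.
  by rewrite -normCKC exprn_ge0.
have lr : l \is Num.real by apply: dreal.
have H1 : l * N w <= Q w.
  rewrite -Nuw -Qu; apply: le_trans (real_ler_norm _) _.
    by rewrite Qu realM.
  rewrite QuE QwE; apply: le_trans (ler_norm_sum _ _ _) _; apply: ler_sum => i _.
  apply: le_trans (ler_norm_sum _ _ _) _; apply: ler_sum => j _.
  by rewrite !normrM norm_conjC (ger0_norm (G0 i j)).
have H2 : \sum_k (l - d 0 k) * (((P *m w) k 0)^* * (P *m w) k 0) = 0.
  rewrite -Hle; apply/eqP; rewrite eq_le subr_le0 H1 /= Hle.
  by apply: sumr_ge0 => k _; apply: Hnn.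
have H3 := psumr_eq0P (Hnn w) H2.
have dv : diag_mx d *m (P *m w) = l *: (P *m w).
  apply/matrixP => k j; rewrite mul_diag_mx mxE [RHS]mxE ord1.
  have /eqP := H3 k isT; rewrite !mulf_eq0 conjC_eq0 orbb subr_eq0.
  by case/orP => [/eqP <- //|/eqP ->]; rewrite !mulr0.
exists l, w; split.
- apply: (contraNneq _ un) => w0; apply/eqP/matrixP => i j.
  have := congr1 (fun M : 'cV[C]_n => M i j) w0; rewrite !mxE ord1.
  by move/eqP; rewrite normr_eq0 => /eqP.
- by move=> i; rewrite mxE normr_ge0.
- by rewrite GE -!mulmxA dv -scalemxAr mulmxA mulVmx // mul1mx.
Qed.

Theorem perron_core n (G : 'M[C]_n) (m M : C) : (0 < n)%N -> G^T = G -> 0 < m ->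
  (forall i j, m <= G i j <= M) ->
  exists l (x : 'cV[C]_n), [/\ 0 < l, forall i, 0 < x i 0, G *m x = l *: x &
   forall mu y, y != 0 -> G *m y = mu *: y ->
     [/\ mu \is Num.real, (mu = l -> exists c, y = c *: x) &
         (mu != l -> mu <= l - (m / M) ^+ 2 * l)]].
Proof.
move=> n0 Gs m0 GmM.
have Gp i j : 0 < G i j by case/andP: (GmM i j) => h _; apply: lt_le_trans h.
have [l [w [wn w0 Gw]]] := perron_exists n0 Gs (fun i j => ltW (Gp i j)).
have [l0 xp] := perron_pos Gp wn w0 Gw.
exists l, w; split => // mu y yn Gy.
have Gsym i j : G i j = G j i by rewrite -{1}Gs mxE.
have Greal i j : (G i j)^* = G i j by apply: conj_Creal; apply: gtr0_real.
have mur : mu \is Num.real by apply/CrealP; apply: herm_real Gsym Greal yn Gy.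
split => //.
  by move=> e; subst mu; apply: perron_unique Gp xp Gw Gy.
move=> ne; apply: le_trans (real_ler_norm mur) _.
exact: perron_gap Gs GmM m0 xp l0 Gw yn Gy ne.
Qed.
End S.

Section Conc.
Local Open Scope complex_scope.
Variable R : rcfType.
Local Notation C := (R[i]).
Variable D : nat.

Definition idx (a : 'I_D) : 'I_(D * D) := mxtens_index (a, a).

Lemma idx_eq a b : (idx a == idx b) = (a == b).
Proof. by rewrite /idx (can_eq (@mxtens_indexK D D)) xpair_eqE andbb. Qed.

Lemma ket2E a : ket2 R a = delta_mx (idx a) 0.
Proof.
apply/matrixP => i j; case: (mxtens_indexP i) => p q.
rewrite /ket2 /ket !mxE !mxtens_indexK /=.
have e1 (k : 'I_1) : (k == 0) = true by rewrite ord1.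
rewrite !e1 !andbT /idx (can_eq (@mxtens_indexK D D)) xpair_eqE.
by case: (p == a); case: (q == a); rewrite ?mulr1 ?mulr0.
Qed.

Definition dg (v : 'cV[C]_(D * D)) : 'cV[C]_D := \col_b v (idx b) 0.
Definition lift (y : 'cV[C]_D) : 'cV[C]_(D * D) := \sum_a y a 0 *: delta_mx (idx a) 0.
Definition Gm (F : 'M[R]_D) : 'M[C]_D := \matrix_(a, b) ((D%:R)^-1 * (F a b ^+ 2)%:C).

Lemma lift_entry y a : lift y (idx a) 0 = y a 0.
Proof.
rewrite /lift summxE (bigD1 a) //= big1 ?addr0.
  by rewrite !mxE eqxx /= mulr1.
by move=> b ne; rewrite !mxE idx_eq eq_sym (negbTE ne) /= mulr0.
Qed.

Lemma dg_lift y : dg (lift y) = y.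
Proof. by apply/matrixP => i j; rewrite ord1 mxE lift_entry. Qed.

Lemma liftZ c y : lift (c *: y) = c *: lift y.
Proof.
by rewrite /lift scaler_sumr; apply: eq_bigr => a _; rewrite scalerA mxE.
Qed.

Lemma lift0 : lift 0 = 0.
Proof. by rewrite /lift big1 // => a _; rewrite mxE scale0r. Qed.

Lemma dgZ c v : dg (c *: v) = c *: dg v.
Proof. by apply/matrixP => i j; rewrite !mxE. Qed.

Lemma row_col (v : 'cV[C]_(D * D)) p : delta_mx 0 p *m v = (v p 0)%:M.
Proof.
by rewrite -rowE; apply/matrixP => i j; rewrite !ord1 !mxE eqxx mulr1n.
Qed.

Lemma Klift F v : Kop F *m v = lift (Gm F *m dg v).
Proof.
rewrite /Kop /lift -scalemxAl mulmx_suml scaler_sumr; apply: eq_bigr => a _.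
rewrite mulmx_suml scaler_sumr mxE scaler_suml; apply: eq_bigr => b _.
rewrite -scalemxAl !ket2E trmx_delta -mulmxA row_col mul_mx_scalar !scalerA !mxE.
congr (_ *: _); ring.
Qed.

Lemma top_gap_shift n (K : 'M[C]_n) (lam g a e : R) (v : 'cV[C]_n) : 0 < e ->
  top_gap K lam g v ->
  top_gap ((a%:C)%:M + (e%:C) *: K) (a + e * lam) (e * g) v.
Proof.
move=> e0 [[vn Kv] Hle Hu Hg].
have e0C : 0 < e%:C by rewrite ltcR.
have eC : e%:C != 0 by rewrite gt_eqF.
have Mv w : ((a%:C)%:M + (e%:C) *: K) *m w = a%:C *: w + e%:C *: (K *m w).
  by rewrite mulmxDl mul_scalar_mx -scalemxAl.
have back mu w : eigvec ((a%:C)%:M + (e%:C) *: K) mu w ->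
    eigvec K ((mu - a%:C) / e%:C) w /\ mu = a%:C + e%:C * ((mu - a%:C) / e%:C).
  move=> [wn Mw]; split; last by rewrite mulrC divfK // addrC subrK.
  split => //; apply: (scalerI eC).
  rewrite scalerA mulrC divfK // scalerBl -Mw Mv addrC addKr //.
have E1 : (a + e * lam)%:C = a%:C + e%:C * lam%:C by rewrite rmorphD rmorphM.
have E2 : (a + e * lam - e * g)%:C = a%:C + e%:C * (lam - g)%:C.
  by rewrite !rmorphB rmorphD !rmorphM mulrBr addrA.
split.
- by split => //; rewrite Mv Kv scalerA -scalerDl E1.
- move=> mu w /back [/Hle h ->]; rewrite E1 lerD2l ler_pM2l //.
- move=> w /back [h _]; apply: Hu.
  by move: h; rewrite E1 addrC addKr mulrC mulKf.
- move=> mu w /back [h ->] ne.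
  rewrite E2 lerD2l ler_pM2l //; apply: Hg h _.
  apply: contraNneq ne => e1; rewrite e1 E1 //.
Qed.
End Conc.

Local Open Scope complex_scope.

Theorem mainTheorem7 (R : rcfType) (D : nat) (f : R) (F : 'M[R]_D) :
  (0 < D)%N -> 0 < f -> f <= 1 -> F^T = F ->
  (forall a b, f <= F a b <= 1) ->
  exists (lambda : R) (x : 'I_D -> R),
    [/\ (forall a, 0 < x a),
        (forall a b, x a / x b <= (f ^+ 2)^-1),
        f ^+ 2 <= lambda <= 1,
        top_gap (Kop F) lambda (f ^+ 4 * lambda) (Psi x) &
        (forall a eps : R, 0 < eps ->
           top_gap ((a%:C)%:M + (eps ^+ 2)%:C *: Kop F)
                   (a + eps ^+ 2 * lambda) (eps ^+ 2 * f ^+ 4 * lambda) (Psi x))].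
Proof.
move=> D0 f0 f1 Fs Fb.
set G := Gm F.
have oneC : (1 : R)%:C = 1 := rmorph1 _.
have Dn0 : (D%:R : R[i]) != 0 by rewrite pnatr_eq0 -lt0n.
pose M : R[i] := (D%:R)^-1.
have M0 : 0 < M by rewrite invr_gt0 ltr0n.
pose m : R[i] := M * (f ^+ 2)%:C.
have fC : 0 < (f ^+ 2)%:C by rewrite ltcR exprn_gt0.
have Gs : G^T = G.
  apply/matrixP => a b; rewrite !mxE; congr (_ * (_ ^+ 2)%:C).
  by rewrite -[in RHS]Fs mxE.
have Fab a b : 0 < F a b by case/andP: (Fb a b) => h _; apply: lt_le_trans h.
have GmM a b : m <= G a b <= M.
  rewrite /m /M mxE; apply/andP; split.
    rewrite ler_pM2l // lecR !expr2; have [h _] := andP (Fb a b).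
    by apply: ler_pM => //; exact: ltW.
  rewrite -[X in _ <= X]mulr1 ler_pM2l // -oneC lecR exprn_ile1 //; first exact: ltW (Fab a b).
  by case/andP: (Fb a b).
have m0 : 0 < m by rewrite mulr_gt0.
have [l [x [l0 xp Gx H]]] := perron_core D0 Gs m0 GmM.
have lr : l \is Num.real := gtr0_real l0.
pose lam : R := @complex.Re R l.
have lE : lam%:C = l := RRe_real lr.
pose xr a : R := @complex.Re R (x a 0).
have xE a : (xr a)%:C = x a 0 := RRe_real (gtr0_real (xp a)).
pose S := \sum_a x a 0.
have S0 : 0 < S.
  by rewrite /S (bigD1 (Ordinal D0)) //=; apply: ltr_wpDr; rewrite ?xp // sumr_ge0 // => i _; rewrite ltW.
have lx a : l * x a 0 = \sum_b G a b * x b 0.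
  by have := congr1 (fun v : 'cV[R[i]]_D => v a 0) Gx; rewrite !mxE => ->.
have bnd a : m * S <= l * x a 0 <= M * S.
  rewrite lx /S !mulr_sumr; apply/andP; split; apply: ler_sum => b _.
    by apply: ler_wpM2r; [exact: ltW | case/andP: (GmM a b)].
  by apply: ler_wpM2r; [exact: ltW | case/andP: (GmM a b)].
have mM : m / M = (f ^+ 2)%:C by rewrite /m mulrC mulKf ?gt_eqF.
have PsiE : Psi xr = lift x.
  by rewrite /Psi /lift; apply: eq_bigr => a _; rewrite xE ket2E.
have MD : M *+ D = 1.
  by rewrite /M -(mulr_natl (D%:R^-1 : R[i]) D) mulfV.
have mD : m *+ D = (f ^+ 2)%:C by rewrite /m -mulrnAl MD mul1r.
have lS : l * S = \sum_b (\sum_a G a b) * x b 0.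
  rewrite /S mulr_sumr (eq_bigr _ (fun a _ => lx a)) exchange_big /=.
  by apply: eq_bigr => b _; rewrite mulr_suml.
have cs b : m *+ D <= \sum_a G a b <= M *+ D.
  have sc (c : R[i]) : \sum_(a < D) c = c *+ D by rewrite sumr_const card_ord.
  rewrite -!sc.
  by apply/andP; split; apply: ler_sum => a _; case/andP: (GmM a b).
have gapE : (lam - f ^+ 4 * lam)%:C = l - (m / M) ^+ 2 * l.
  by rewrite -lE mM -rmorphXn -exprM -rmorphM -rmorphB.
have eig mu v : eigvec (Kop F) mu v -> mu = 0 \/ (dg v != 0 /\ G *m dg v = mu *: dg v).
  move=> [vn Kv]; have := Klift F v; rewrite Kv -/G => Kv'.
  have [y0|yn] := eqVneq (dg v) 0.
    left; move: Kv'; rewrite y0 mulmx0 lift0 => /eqP.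
    by rewrite scaler_eq0 (negbTE vn) orbF => /eqP.
  by right; split => //; have := congr1 (@dg R D) Kv'; rewrite dg_lift dgZ => ->.
have TG : top_gap (Kop F) lam (f ^+ 4 * lam) (Psi xr).
  rewrite PsiE; split.
  - split.
      apply: contraTneq (xp (Ordinal D0)) => h; have := dg_lift x; rewrite h => <-.
      by rewrite !mxE ltxx.
    by rewrite Klift -/G dg_lift Gx liftZ lE.
  - move=> mu v /eig [->|[yn Gy]]; first by rewrite lE ltW.
    have [mr Hu Hg] := H mu _ yn Gy; rewrite lE.
    have [->|ne] := eqVneq mu l; first by [].
    apply: le_trans (Hg ne) _; rewrite gerBl; apply: mulr_ge0; last exact: ltW.
    by rewrite mM; apply: exprn_ge0; exact: ltW.
  - move=> v; rewrite lE => Ev; have [e|[yn Gy]] := eig _ _ Ev.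
      by rewrite e ltxx in l0.
    have [_ Hu _] := H l _ yn Gy; have [c yc] := Hu erefl; exists c.
    case: Ev => vn Kv.
    have : l *: v = l *: lift (dg v) by rewrite -Kv Klift -/G Gy liftZ.
    by move/(scalerI (lt0r_neq0 l0)) => ->; rewrite yc liftZ.
  - move=> mu v Ev ne; rewrite lE in ne; rewrite gapE.
    have [->|[yn Gy]] := eig _ _ Ev.
      rewrite subr_ge0 mM; apply: ler_piMl; first exact: ltW.
      apply: exprn_ile1; first exact: ltW.
      by rewrite -oneC lecR; apply: exprn_ile1 => //; exact: ltW.
    by have [_ _ Hg] := H mu _ yn Gy; apply: Hg ne.
exists lam, xr; split.
- have ltr0c (k : R) : (0 < k%:C) = (0 < k) by rewrite ltcE /= eqxx.
  by move=> a; rewrite -ltr0c xE xp.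
- move=> a b.
  have e1 : (xr a / xr b)%:C = x a 0 / x b 0.
    by rewrite -xE -(xE b) rmorphM fmorphV.
  have e2 : ((f ^+ 2)^-1)%:C = ((f ^+ 2)%:C)^-1 by rewrite fmorphV.
  rewrite -lecR e1 e2.
  have fx : (f ^+ 2)%:C * x a 0 <= x b 0.
    rewrite -(ler_pM2l l0) mulrCA; apply: le_trans (_ : m * S <= _); last by case/andP: (bnd b).
    rewrite (_ : m * S = (f ^+ 2)%:C * (M * S)); last by rewrite /m; ring.
    by rewrite ler_pM2l //; case/andP: (bnd a).
  rewrite ler_pdivrMr ?xp // -(ler_pM2l fC) mulrA mulfV ?mul1r //.
  by rewrite gt_eqF.
- apply/andP; split; rewrite -lecR lE.
    rewrite -(ler_pM2r S0) lS -mD /S mulr_sumr; apply: ler_sum => b _.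
    by apply: ler_wpM2r; [exact: ltW (xp b) | case/andP: (cs b)].
  rewrite oneC -(ler_pM2r S0) lS mul1r /S; apply: ler_sum => b _.
  rewrite -[X in _ <= X]mul1r -MD.
  by apply: ler_wpM2r; [exact: ltW (xp b) | case/andP: (cs b)].
- exact: TG.
- move=> a eps e0; rewrite -mulrA; apply: top_gap_shift => //.
  exact: exprn_gt0.
Qed.
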